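(* Let $n,t\ge1$. For each $1\le k\le n$ let $\bm{X}^k=(X_1^k,\dots,X_t^k)$ be a random vector, fix an index $1\le i\le n$, and let $\widetilde{\bm{X}}^i=(\widetilde{X}_1^i,\dots,\widetilde{X}_t^i)$ be another random vector. Assume spatial independence: $\bm{X}^1,\dots,\bm{X}^n$ are mutually independent, and $\bm{X}^1,\dots,\bm{X}^{i-1},\widetilde{\bm{X}}^i,\bm{X}^{i+1},\dots,\bm{X}^n$ are mutually independent. Let $f_j\in\mathfrak{F}_{USIA}$ for $1\le j\le t$, and set $X_j=f_j(X_j^1,\dots,X_j^n)$ and $\widetilde{X}_j=f_j(X_j^1,\dots,X_j^{i-1},\widetilde{X}_j^i,X_j^{i+1},\dots,X_j^n)$. If $\bm{X}^i\le_{dcx}\widetilde{\bm{X}}^i$ and $\bm{X}^i$ and $\widetilde{\bm{X}}^i$ have a common conditionally increasing copula, then $$(X_1,\dots,X_t)\le_{dcx}(\widetilde{X}_1,\dots,\widetilde{X}_t)\quad\text{and}\quad \sum_{j=1}^t\alpha_jX_j\le_{cx}\sum_{j=1}^t\alpha_j\widetilde{X}_j$$ for all $\alpha_1,\dots,\alpha_t\ge0$.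
   Context: $\mathfrak{F}_{USIA}$ is the set of functions $f:\mathbb{R}^n\to\mathbb{R}$ such that for every $\bm{x}\in\mathbb{R}^n$ and every coordinate $i$, the map $x_i\mapsto f(\bm{x})$ (other coordinates fixed) is affine and strictly increasing. A function $\phi:\mathbb{R}^t\to\mathbb{R}$ is directionally convex if it is supermodular and convex in each coordinate. $\bm{X}\le_{dcx}\bm{Y}$ means $\mathbb{E}\phi(\bm{X})\le\mathbb{E}\phi(\bm{Y})$ for all directionally convex $\phi$ for which the expectations exist; $X\le_{cx}Y$ (real) means $\mathbb{E}\phi(X)\le\mathbb{E}\phi(Y)$ for all convex $\phi$. A copula $C$ is conditionally increasing if a random vector $\bm{U}$ with distribution $C$ satisfies: for every $i$ and every index set $J\not\ni i$, $\mathbb{E}[\psi(U_i)\mid U_j,j\in J]$ is increasing in $(U_j)_{j\in J}$ for every increasing $\psi$. *)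

(* Defs.v *)
From HB Require Import structures.
From mathcomp Require Import all_boot all_order all_algebra.
From mathcomp Require Import all_classical all_reals all_analysis.
Set Implicit Arguments. Unset Strict Implicit. Unset Printing Implicit Defensive.
Import Order.TTheory GRing.Theory Num.Theory.
Local Open Scope classical_set_scope.
Local Open Scope ring_scope.

Section defs.
Variable R : realType.

Definition upd {I : finType} (x : I -> R) (k : I) (y : R) : I -> R :=
  fun l => if l == k then y else x l.

Definition USIA {n : nat} (f : ('I_n -> R) -> R) : Prop :=
  forall (x : 'I_n -> R) (k : 'I_n), exists a b : R,
    0 < a /\ forall y : R, f (upd x k y) = a * y + b.

Definition convex_fun (g : R -> R) : Prop :=
  forall (a b l : R), 0 <= l <= 1 ->
    g (l * a + (1 - l) * b) <= l * g a + (1 - l) * g b.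

Definition supermodular {t : nat} (phi : ('I_t -> R) -> R) : Prop :=
  forall x y : 'I_t -> R,
    phi x + phi y <= phi (fun j => Num.max (x j) (y j))
                     + phi (fun j => Num.min (x j) (y j)).

Definition dir_convex {t : nat} (phi : ('I_t -> R) -> R) : Prop :=
  supermodular phi /\
  forall (x : 'I_t -> R) (j : 'I_t), convex_fun (fun y => phi (upd x j y)).

(* Borel sigma-algebra of R^t: product sigma-algebra generated by rectangles *)
Definition rect_sets (t : nat) : set (set ('I_t -> R)) :=
  [set A | exists B : 'I_t -> set R,
     (forall j, measurable (B j)) /\ A = [set x | forall j, B j (x j)]].

Definition Rt_measurable (t : nat) (A : set ('I_t -> R)) : Prop :=
  smallest (sigma_algebra setT) (@rect_sets t) A.

Definition Rt_measurable_fun (t : nat) (g : ('I_t -> R) -> R) : Prop :=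
  forall B : set R, measurable B -> Rt_measurable (g @^-1` B).

Section onspace.
Context {d : measure_display} {T : measurableType d} (P : probability T R).

Definition vec_at {t : nat} (Y : 'I_t -> T -> R) (w : T) : 'I_t -> R :=
  fun j => Y j w.

Definition mutually_independent {n t : nat} (Y : 'I_n -> 'I_t -> T -> R) : Prop :=
  forall A : 'I_n -> set ('I_t -> R), (forall k, Rt_measurable (A k)) ->
    P (\bigcap_(k in [set: 'I_n]) [set w | A k (vec_at (Y k) w)])
    = (\prod_(k < n) P [set w | A k (vec_at (Y k) w)])%E.

(* directionally convex order (expectations assumed to exist, i.e. finite) *)
Definition dcx_le {t : nat} (Y Z : 'I_t -> T -> R) : Prop :=
  forall phi : ('I_t -> R) -> R, dir_convex phi ->
    P.-integrable setT (fun w => (phi (vec_at Y w))%:E) ->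
    P.-integrable setT (fun w => (phi (vec_at Z w))%:E) ->
    (\int[P]_w (phi (vec_at Y w))%:E <= \int[P]_w (phi (vec_at Z w))%:E)%E.

Definition cx_le (Y Z : T -> R) : Prop :=
  forall phi : R -> R, convex_fun phi ->
    P.-integrable setT (fun w => (phi (Y w))%:E) ->
    P.-integrable setT (fun w => (phi (Z w))%:E) ->
    (\int[P]_w (phi (Y w))%:E <= \int[P]_w (phi (Z w))%:E)%E.

Definition has_copula {t : nat} (Y : 'I_t -> T -> R) (C : ('I_t -> R) -> R) : Prop :=
  forall x : 'I_t -> R,
    P [set w | forall j, Y j w <= x j]
    = (C (fun j => fine (P [set w | Y j w <= x j])))%:E.

Definition cdf_on_unit_cube {t : nat} (U : 'I_t -> T -> R) (C : ('I_t -> R) -> R) : Prop :=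
  forall u : 'I_t -> R, (forall j, 0 <= u j <= 1) ->
    P [set w | forall j, U j w <= u j] = (C u)%:E.

(* U is conditionally increasing: for all i, J not containing i, and increasing
   psi, E[psi(U_i) | U_j, j in J] has a version g(U) that is increasing in
   (U_j)_{j in J}. *)
Definition cond_increasing_rv {t : nat} (U : 'I_t -> T -> R) : Prop :=
  forall (i : 'I_t) (J : {set 'I_t}), i \notin J ->
  forall psi : R -> R, {homo psi : x y / x <= y} ->
  exists g : ('I_t -> R) -> R,
    [/\ Rt_measurable_fun g,
        (forall u v : 'I_t -> R, (forall j, j \in J -> u j = v j) -> g u = g v),
        (forall u v : 'I_t -> R, (forall j, u j <= v j) -> g u <= g v) &
        forall B : 'I_t -> set R, (forall j, measurable (B j)) ->
          (\int[P]_(w in [set w | forall j, j \in J -> B j (U j w)])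
              (psi (U i w))%:E
           = \int[P]_(w in [set w | forall j, j \in J -> B j (U j w)])
              (g (vec_at U w))%:E)%E].
End onspace.

Definition is_copula {t : nat} (C : ('I_t -> R) -> R) : Prop :=
  exists (d' : measure_display) (O : measurableType d') (Q : probability O R)
         (U : 'I_t -> O -> R),
    (forall j, measurable_fun setT (U j)) /\
    (forall j (u : R), 0 <= u <= 1 -> Q [set w | U j w <= u] = u%:E) /\
    cdf_on_unit_cube Q U C.

Definition cond_increasing_copula {t : nat} (C : ('I_t -> R) -> R) : Prop :=
  forall (d' : measure_display) (O : measurableType d') (Q : probability O R)
         (U : 'I_t -> O -> R),
    (forall j, measurable_fun setT (U j)) ->
    cdf_on_unit_cube Q U C -> cond_increasing_rv Q U.

Definition replace {T : Type} {n t : nat} (X : 'I_n -> 'I_t -> T -> R) (i : 'I_n)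
  (Xt : 'I_t -> T -> R) : 'I_n -> 'I_t -> T -> R :=
  fun k => if k == i then Xt else X k.

End defs.

(* Main.v *)
Require Import Defs.
From HB Require Import structures.
From mathcomp Require Import all_boot all_order all_algebra.
From mathcomp Require Import all_classical all_reals all_analysis.
From mathcomp Require Import measurable_realfun.
From mathcomp Require Import ring lra.
Import Order.TTheory GRing.Theory Num.Theory.
Import numFieldNormedType.Exports.
Set Implicit Arguments. Unset Strict Implicit. Unset Printing Implicit Defensive.
Local Open Scope classical_set_scope.
Local Open Scope ring_scope.

Section partAB.
Variable R : realType.
Local Notation E m := (g_sigma_algebraType (@rect_sets R m)).

Lemma rect_meas m (B : 'I_m -> set R) : (forall j, measurable (B j)) ->
  measurable ([set x | forall j, B j (x j)] : set (E m)).
Proof. by move=> mB; apply: sub_sigma_algebra; exists B. Qed.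

Lemma measurable_coord m (j : 'I_m) : measurable_fun setT (fun x : E m => x j).
Proof.
move=> _ B mB; rewrite setTI.
have -> : (fun x : E m => x j) @^-1` B =
    [set x | forall l, (if l == j then B else setT) (x l)].
  apply/seteqP; split => x /=.
  - by move=> Bx l; case: eqP => // ->.
  - by move=> /(_ j); rewrite eqxx.
apply: (@rect_meas m (fun l => if l == j then B else setT)) => l.
by case: eqP.
Qed.

Lemma measurable_vec d (D : measurableType d) m (g : D -> E m) :
  (forall j, measurable_fun setT (fun w => g w j)) -> measurable_fun setT g.
Proof.
move=> mg; apply: (@measurability _ _ D (E m) setT g (@rect_sets R m) erefl).
move=> _ [A [B [mB ->]] <-].
have -> : setT `&` g @^-1` [set x | forall j, B j (x j)] =
    \bigcap_(j in [set: 'I_m]) (setT `&` (fun w => g w j) @^-1` B j).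
  apply/seteqP; split => w /=.
  - by move=> [_ h] j _; split.
  - by move=> h; split => // j; have [] := h j I.
apply: fin_bigcap_measurable; first exact: finite_finset.
by move=> j _; apply: mg.
Qed.

Definition LL m (g : ('I_m -> R) -> R) := forall (x : 'I_m -> R) (k : 'I_m) (y : R),
  exists M : R, forall e, 0 <= e <= 1 ->
    `|g (upd x k (y - e)) - g (upd x k y)| <= M * e.

Definition merge m (s : seq 'I_m) (x x0 : 'I_m -> R) : 'I_m -> R :=
  fun l => if l \in s then x l else x0 l.

Lemma merge_cons m k s (x x0 : 'I_m -> R) :
  merge (k :: s) x x0 = merge s x (upd x0 k (x k)).
Proof.
apply/funext => l; rewrite /merge /upd inE.
by have [->|_] := eqP; case: ifP.
Qed.

Lemma floor_set_meas (c : R) (q : int) :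
  measurable [set y : R | Num.floor (c * y) = q].
Proof.
have -> : [set y : R | Num.floor (c * y) = q] =
   setT `&` ( *%R c) @^-1` `[q%:~R, (q + 1)%:~R[.
  apply/seteqP; split => y /=.
  - by move=> <-; split => //; rewrite in_itv /= floor_itv.
  - by move=> [_]; rewrite in_itv /= => /floor_def.
by apply: measurable_realfun.mulrl_measurable => //; exact: measurable_itv.
Qed.

Lemma LL_measurable m (g : ('I_m -> R) -> R) : LL g ->
  measurable_fun setT (g : E m -> R).
Proof.
move=> Lg.
suff H : forall s x0, measurable_fun setT (fun x : E m => g (merge s x x0)).
  have := H (enum 'I_m) (fun _ => 0).
  apply: eq_measurable_fun => x _; congr g; apply/funext => l.
  by rewrite /merge mem_enum.
elim => [|k s IH] x0.
  have -> : (fun x : E m => g (merge [::] x x0)) = cst (g x0).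
    by apply/funext => x; congr g; apply/funext => l.
  exact: measurable_cst.
apply: (eq_measurable_fun (fun x : E m => g (merge s x (upd x0 k (x k))))).
  by move=> x _; rewrite merge_cons.
pose c (N : nat) : R := N.+1%:R.
pose gq N (q : int) (x : E m) := g (merge s x (upd x0 k (q%:~R / c N))).
pose hN N (x : E m) := gq N (Num.floor (c N * x k)) x.
apply: (measurable_realfun.measurable_fun_cvg (h := hN)).
- move=> N _ B mB; rewrite setTI.
  pose S (q : int) := (fun x : E m => x k) @^-1` [set y | Num.floor (c N * y) = q]
     `&` (gq N q @^-1` B).
  have mS q : measurable (S q).
    apply: measurableI.
      by rewrite -[X in measurable X]setTI; apply: measurable_coord => //; exact: floor_set_meas.
    by rewrite -[X in measurable X]setTI; apply: IH.
  have -> : hN N @^-1` B = (\bigcup_p S (Posz p)) `|` (\bigcup_p S (Negz p)).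
    apply/seteqP; split => x /=.
    - rewrite /hN; case Ef : (Num.floor (c N * x k)) => [p|p] Bx.
      + by left; exists p => //; split => //=; rewrite /gq -Ef.
      + by right; exists p => //; split => //=; rewrite /gq -Ef.
    - by move=> [[p _ [/= Ef Bx]]|[p _ [/= Ef Bx]]]; rewrite /hN Ef.
  by apply: measurableU; apply: bigcupT_measurable => p.
- move=> x _.
  have [ks|ks] := boolP (k \in s).
    have cst_eq v : merge s x (upd x0 k v) = merge s x (upd x0 k (x k)).
      apply/funext => l; rewrite /merge /upd; case: ifP => // ls.
      by case: eqP => // lk; rewrite lk ks in ls.
    rewrite /hN /gq; under eq_fun do rewrite cst_eq.
    exact: cvg_cst.
  have upd_eq v : merge s x (upd x0 k v) = upd (merge s x x0) k v.
    apply/funext => l; rewrite /merge /upd; case: ifP => // ls.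
    by case: eqP => // lk; rewrite -lk ls in ks.
  rewrite /hN /gq; under eq_fun do rewrite upd_eq; rewrite upd_eq.
  have [M HM] := Lg (merge s x x0) k (x k).
  apply/cvgrPdist_le => eps eps0.
  have e0 : 0 < eps / (`|M| + 1) by rewrite divr_gt0 // ltr_pwDr.
  have /cvgrPdist_le /(_ _ e0) := @cvg_harmonic R.
  apply: filterS => N; rewrite sub0r normrN ger0_norm ?harmonic_ge0 // => hle.
  set q := Num.floor _.
  have cN0 : 0 < c N by rewrite /c ltr0n.
  set e := x k - q%:~R / c N.
  have qE : q%:~R / c N = x k - e by rewrite /e opprB addrC subrK.
  have e0' : 0 <= e <= 1 /\ e <= harmonic N.
    have := floor_itv (c N * x k); rewrite -/q => /andP[h1 h2].
    have hN' : harmonic N = (c N)^-1 by [].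
    have ec : e * c N = c N * x k - q%:~R.
      by rewrite /e mulrBl [x k * _]mulrC divfK // gt_eqF.
    have g0 : 0 <= e * c N by rewrite ec subr_ge0.
    have g1 : e * c N <= 1.
      by rewrite ec lerBlDl; move: h2; rewrite intrD addrC => /ltW.
    have eE : e = (e * c N) / c N by rewrite mulfK // gt_eqF.
    have ci : (c N)^-1 <= 1 by rewrite invf_le1 // /c ler1n.
    have eh : e <= (c N)^-1.
      by rewrite eE -[leRHS]mul1r ler_wpM2r // invr_ge0 ltW.
    rewrite hN'; split => //; apply/andP; split; last exact: le_trans eh ci.
    by rewrite eE divr_ge0 // ltW.
  move: e0' => [e01 eh].
  rewrite qE distrC (le_trans (HM e e01)) //.
  have Me : M * e <= `|M| * harmonic N.
    apply: (le_trans (ler_norm _)); rewrite normrM (ger0_norm (proj1 (andP e01))).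
    by apply: ler_wpM2l.
  apply: (le_trans Me).
  apply: (le_trans (ler_wpM2l (normr_ge0 _) hle)).
  rewrite mulrA ler_pdivrMr ?ltr_pwDr // mulrC ler_pM2l // lerDl //.
Qed.
End partAB.
Section partC.
Variable R : realType.

Lemma convex_LL1 (h : R -> R) : convex_fun h -> forall y, exists M : R,
  forall e, 0 <= e <= 1 -> `|h (y - e) - h y| <= M * e.
Proof.
move=> ch y; exists (`|h (y - 1) - h y| + `|h (y + 1) - h y|) => e /andP[e0 e1].
have u1 : h (y - e) <= e * h (y - 1) + (1 - e) * h y.
  have := ch (y - 1) y e; rewrite e0 e1 => /(_ isT).
  by have -> : e * (y - 1) + (1 - e) * y = y - e by ring.
have u3 : h (y + e) <= e * h (y + 1) + (1 - e) * h y.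
  have := ch (y + 1) y e; rewrite e0 e1 => /(_ isT).
  by have -> : e * (y + 1) + (1 - e) * y = y + e by ring.
have u2 : h y <= 2^-1 * h (y - e) + (1 - 2^-1) * h (y + e).
  have := ch (y - e) (y + e) 2^-1.
  have -> : 2^-1 * (y - e) + (1 - 2^-1) * (y + e) = y.
    by field.
  apply; apply/andP; split; first by rewrite invr_ge0.
  by rewrite invf_le1 // ler1n.
have a1 : e * (h (y - 1) - h y) <= e * `|h (y - 1) - h y| by rewrite ler_wpM2l // ler_norm.
have a2 : - (e * `|h (y + 1) - h y|) <= e * (h (y + 1) - h y) .
  by rewrite -mulrN ler_wpM2l // lerNnormlW.
have a2' : e * (h (y + 1) - h y) <= e * `|h (y + 1) - h y| by rewrite ler_wpM2l // ler_norm.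
have a1' : - (e * `|h (y - 1) - h y|) <= e * (h (y - 1) - h y).
  by rewrite -mulrN ler_wpM2l // lerNnormlW.
have n1 : 0 <= e * `|h (y - 1) - h y| by rewrite mulr_ge0.
have n2 : 0 <= e * `|h (y + 1) - h y| by rewrite mulr_ge0.
apply/ler_normlP; split; rewrite mulrDl ![_ * e]mulrC; lra.
Qed.
End partC.
Section partD1.
Variable R : realType.

Lemma convex_affine (h : R -> R) (a b : R) : convex_fun h ->
  convex_fun (fun y => h (a * y + b)).
Proof.
move=> ch u v l hl; have := ch (a * u + b) (a * v + b) l hl.
by have -> : l * (a * u + b) + (1 - l) * (a * v + b) = a * (l * u + (1 - l) * v) + b
  by ring.
Qed.

Lemma max_affine (a b u v : R) : 0 < a ->
  a * Num.max u v + b = Num.max (a * u + b) (a * v + b).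
Proof.
move=> a0; have [uv|vu] := leP u v.
  by rewrite !max_r // lerD2r ler_pM2l.
by rewrite !max_l // lerD2r ler_pM2l // ltW.
Qed.

Lemma min_affine (a b u v : R) : 0 < a ->
  a * Num.min u v + b = Num.min (a * u + b) (a * v + b).
Proof.
move=> a0; have [uv|vu] := leP u v.
  by rewrite !min_l // lerD2r ler_pM2l.
by rewrite !min_r // lerD2r ler_pM2l // ltW.
Qed.

Lemma dcx_affine t (phi : ('I_t -> R) -> R) (a b : 'I_t -> R) :
  dir_convex phi -> (forall j, 0 < a j) ->
  dir_convex (fun x => phi (fun j => a j * x j + b j)).
Proof.
move=> [sm cv] a0; split.
  move=> x y /=.
  have -> : (fun j => a j * Num.max (x j) (y j) + b j) =
     (fun j => Num.max (a j * x j + b j) (a j * y j + b j)).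
    by apply/funext => j; rewrite max_affine.
  have -> : (fun j => a j * Num.min (x j) (y j) + b j) =
     (fun j => Num.min (a j * x j + b j) (a j * y j + b j)).
    by apply/funext => j; rewrite min_affine.
  exact: sm.
move=> x j.
have -> : (fun y => phi (fun l => a l * upd x j y l + b l)) =
  (fun y => phi (upd (fun l => a l * x l + b l) j (a j * y + b j))).
  apply/funext => y; congr phi; apply/funext => l; rewrite /upd.
  by case: eqP => // ->.
exact: (convex_affine (a j) (b j) (cv _ j)).
Qed.

Lemma convex_pair (phi : R -> R) (s s' M m : R) : convex_fun phi ->
  m <= s <= M -> s + s' = M + m -> phi s + phi s' <= phi M + phi m.
Proof.
move=> cv /andP[ms sM] ss.
have [/eqP Mm|Mm] := boolP (M == m).
  have es : s = M by apply/le_anti; rewrite sM Mm ms.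
  have es' : s' = m by move: ss; rewrite es Mm => /addrI.
  by rewrite es es'.
have d0 : 0 < M - m by rewrite subr_gt0 lt_neqAle eq_sym Mm (le_trans ms sM).
pose l := (s - m) / (M - m).
have l0 : 0 <= l by apply: divr_ge0; [rewrite subr_ge0|exact: ltW].
have l1 : l <= 1 by rewrite ler_pdivrMr // mul1r lerD2r.
have sE : s = l * M + (1 - l) * m.
  by rewrite /l; field; rewrite subr_eq0.
have s'E : s' = l * m + (1 - l) * M.
  have -> : s' = M + m - s by rewrite -ss; ring.
  by rewrite sE; ring.
have h1 := cv M m l (introT andP (conj l0 l1)).
have h2 := cv m M l (introT andP (conj l0 l1)).
rewrite -sE in h1; rewrite -s'E in h2.
lra.
Qed.

Lemma dcx_sum t (phi : R -> R) (alpha : 'I_t -> R) : convex_fun phi ->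
  (forall j, 0 <= alpha j) ->
  dir_convex (fun y : 'I_t -> R => phi (\sum_(j < t) alpha j * y j)).
Proof.
move=> cv a0; split.
  move=> x y /=; apply: convex_pair => //.
    apply/andP; split; apply: ler_sum => j _; apply: ler_wpM2l => //.
      by rewrite ge_min lexx.
    by rewrite le_max lexx.
  rewrite -!big_split /=; apply: eq_bigr => j _.
  rewrite -!mulrDr; congr (_ * _).
  have [uv|vu] := leP (x j) (y j).
    exact: addrC.
  by [].
move=> x j.
have -> : (fun y => phi (\sum_(l < t) alpha l * upd x j y l)) =
  (fun y => phi (alpha j * y + \sum_(l < t | l != j) alpha l * x l)).
  apply/funext => y; congr phi; rewrite (bigD1 j) //= /upd eqxx; congr (_ + _).
  by apply: eq_bigr => l lj; rewrite (negbTE lj).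
exact: convex_affine.
Qed.

End partD1.
Section main_generic.
Variable R : realType.
Local Notation E m := (g_sigma_algebraType (@rect_sets R m)).

Definition mkRV d1 d2 (T1 : measurableType d1) (T2 : measurableType d2)
  (g : T1 -> T2) (mg : measurable_fun setT g) : {mfun T1 >-> T2} :=
  MeasurableFun.Pack (MeasurableFun.Class (isMeasurableFun.Build _ _ _ _ g mg)).

Local Open Scope ereal_scope.

Lemma ae_le_int d (T : measurableType d) (mu : {measure set T -> \bar R})
  (f g : T -> \bar R) : measurable_fun setT f -> measurable_fun setT g ->
  {ae mu, forall x, f x <= g x} -> \int[mu]_x f x <= \int[mu]_x g x.
Proof.
move=> mf mg fg; rewrite integralE [leRHS]integralE; apply: leeB.
- apply: (ae_ge0_le_integral measurableT (fun x _ => funepos_ge0 _ x)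
     (measurable_funepos mf) (fun x _ => funepos_ge0 _ x) (measurable_funepos mg)).
  apply: filterS fg => x fgx _.
  have := @funepos_le _ _ [set x] f g; apply; last by rewrite inE.
  by move=> y; rewrite inE => ->.
- apply: (ae_ge0_le_integral measurableT (fun x _ => funeneg_ge0 _ x)
     (measurable_funeneg mg) (fun x _ => funeneg_ge0 _ x) (measurable_funeneg mf)).
  apply: filterS fg => x fgx _.
  have := @funeneg_le _ _ [set x] f g; apply; last by rewrite inE.
  by move=> y; rewrite inE => ->.
Qed.

Lemma integrable_eqm d (T : measurableType d) (m1 m2 : {measure set T -> \bar R})
  (f : T -> \bar R) : (forall A, measurable A -> m1 A = m2 A) ->
  m1.-integrable setT f -> m2.-integrable setT f.
Proof.
move=> e /integrableP[mf fi]; apply/integrableP; split => //.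
by rewrite (eq_measure_integral m1) // => A mA _; rewrite e.
Qed.

Lemma integrable_comp_dist d d' (T : measurableType d) (T' : measurableType d')
  (P : probability T R) (U : {RV P >-> T'}) (h : T' -> \bar R) :
  measurable_fun setT h -> (distribution P U).-integrable setT h ->
  P.-integrable setT (h \o U).
Proof.
move=> mh /integrableP[_ hi]; apply/integrableP; split.
  by apply: measurableT_comp => //; exact: measurable_funPT.
have := @ge0_integral_distribution _ _ _ _ _ P U (fun y => `|h y|).
move=> <- //; exact: measurableT_comp.
Qed.

Lemma integrable_dist_comp d d' (T : measurableType d) (T' : measurableType d')
  (P : probability T R) (U : {RV P >-> T'}) (h : T' -> \bar R) :
  measurable_fun setT h -> P.-integrable setT (h \o U) ->
  (distribution P U).-integrable setT h.
Proof.
move=> mh /integrableP[_ hi]; apply/integrableP; split => //.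
have := @ge0_integral_distribution _ _ _ _ _ P U (fun y => `|h y|).
move=> -> //; exact: measurableT_comp.
Qed.

End main_generic.

Section main.
Variable R : realType.
Local Notation E m := (g_sigma_algebraType (@rect_sets R m)).
Variables (n t : nat) (i : 'I_n).

Definition CZ : set (set ('I_n -> 'I_t -> R)) :=
  [set A | exists B : 'I_n -> set ('I_t -> R),
    (forall k, Rt_measurable (B k)) /\ A = [set z | forall k, k != i -> B k (z k)]].
Local Notation EZ := (g_sigma_algebraType CZ).
Local Notation W := (E t * EZ)%type.
Definition GW : set (set W) := [set A `*` B | A in @rect_sets R t & B in CZ].

Lemma coordZ (k : 'I_n) (j : 'I_t) : k != i ->
  measurable_fun setT (fun z : EZ => z k j).
Proof.
move=> ki _ B mB; rewrite setTI; apply: sub_sigma_algebra.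
exists (fun l => if l == k then [set v : 'I_t -> R | B (v j)] else setT); split.
  move=> l; case: eqP => _; last exact: (@measurableT _ (E t)).
  by have := measurable_coord j measurableT mB; rewrite setTI.
apply/seteqP; split => z /=.
  by move=> Bz l li; case: eqP => // ->.
by move=> /(_ k ki); rewrite eqxx.
Qed.

Lemma CZT : CZ setT.
Proof.
exists (fun _ => setT); split; first by move=> k; exact: (@measurableT _ (E t)).
by apply/seteqP; split.
Qed.

Lemma rectT : @rect_sets R t setT.
Proof.
exists (fun _ => setT); split; first by move=> k; exact: measurableT.
by apply/seteqP; split.
Qed.

Lemma prodW_gen : (@measurable _ W) = <<s GW >>.
Proof.
apply/seteqP; split; last first.
  apply: smallest_sub; first exact: sigma_algebra_measurable.
  move=> _ [A rA [B cB <-]]; apply: measurableX; exact: sub_sigma_algebra.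
rewrite measurable_prod_measurableType.
apply: smallest_sub; first exact: smallest_sigma_algebra.
move=> _ [A mA [B mB <-]].
have h1 : <<s GW >> (A `*` setT).
  have mf : measurable_fun (setT : set (g_sigma_algebraType GW))
      (fst : g_sigma_algebraType GW -> E t).
    apply: (@measurability _ _ (g_sigma_algebraType GW) (E t) setT fst
      (@rect_sets R t) erefl).
    move=> _ [A' rA' <-]; apply: sub_sigma_algebra.
    exists A' => //; exists setT; first exact: CZT.
    by rewrite setTI setXT.
  have := mf measurableT A mA; rewrite setTI.
  by rewrite setXT.
have h2 : <<s GW >> (setT `*` B).
  have mf : measurable_fun (setT : set (g_sigma_algebraType GW))
      (snd : g_sigma_algebraType GW -> EZ).
    apply: (@measurability _ _ (g_sigma_algebraType GW) EZ setT snd CZ erefl).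
    move=> _ [B' cB' <-]; apply: sub_sigma_algebra.
    exists setT; first exact: rectT.
    by exists B' => //; rewrite setTI setTX.
  have := mf measurableT B mB; rewrite setTI.
  by rewrite setTX.
have -> : A `*` B = (A `*` setT) `&` (setT `*` B).
  by rewrite -setXI setIT setTI.
exact: (@measurableI _ (g_sigma_algebraType GW)).
Qed.

Lemma GW_setI : setI_closed GW.
Proof.
move=> _ _ [A1 [F1 [mF1 ->]] [B1 [G1 [mG1 ->]] <-]]
  [A2 [F2 [mF2 ->]] [B2 [G2 [mG2 ->]] <-]].
rewrite -setXI; exists [set x | forall j, (F1 j `&` F2 j) (x j)].
  exists (fun j => F1 j `&` F2 j); split => //.
  by move=> j; apply: measurableI.
exists [set z | forall k, k != i -> (G1 k `&` G2 k) (z k)].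
  exists (fun k => G1 k `&` G2 k); split => //.
  by move=> k; exact: (@measurableI _ (E t) _ _ (mG1 k) (mG2 k)).
apply/seteqP; split => -[x z] /=.
  move=> [h1 h2]; split; split.
  - by move=> j; have [] := h1 j.
  - by move=> j; have [] := h1 j.
  - by move=> k ki; have [] := h2 k ki.
  - by move=> k ki; have [] := h2 k ki.
by move=> [[a1 a2] [b1 b2]]; split => [j|k ki]; split;
  [exact: a1|exact: a2|exact: b1|exact: b2].
Qed.

Section law.
Variables (d : measure_display) (T : measurableType d) (P : probability T R).
Variables (U : {RV P >-> E t}) (Z : {RV P >-> EZ}) (UZ : {RV P >-> W}).
Hypothesis UZE : forall w, UZ w = (U w, Z w).
Hypothesis indep : forall A B, @rect_sets R t A -> CZ B ->
  P (U @^-1` A `&` Z @^-1` B) = (P (U @^-1` A) * P (Z @^-1` B))%E.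

Lemma law_prod (S : set W) : measurable S ->
  distribution P UZ S = (distribution P U \x distribution P Z)%E S.
Proof.
move=> mS.
apply: (measure_unique GW (fun=> setT)) => //.
- exact: prodW_gen.
- exact: GW_setI.
- move=> _; exists setT; first exact: rectT.
  by exists setT; [exact: CZT|rewrite setXTT].
- by apply/seteqP; split => // x _; exists 0%N.
- move=> _ [A rA [B cB <-]].
  have mA : measurable (A : set (E t)) by exact: sub_sigma_algebra.
  have mB : measurable (B : set EZ) by exact: sub_sigma_algebra.
  transitivity (distribution P U A * distribution P Z B)%E; last first.
    exact: (esym (product_measure1E _ _ mA mB)).
  rewrite /distribution /pushforward /= -indep //.
  by congr (P _); apply/seteqP; split => w /=; rewrite UZE.
- move=> _; rewrite /= /distribution /pushforward preimage_setT.
  by rewrite probability_setT ltry.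
Qed.
End law.


Lemma USIA_LL m (g : ('I_m -> R) -> R) : USIA g -> LL g.
Proof.
move=> hg x k y; have [a [b [a0 hab]]] := hg x k.
exists a => e /andP[e0 e1]; rewrite !hab.
have -> : a * (y - e) + b - (a * y + b) = - (a * e) by ring.
by rewrite normrN normrM !ger0_norm // ltW.
Qed.

Lemma dcx_LL m (phi : ('I_m -> R) -> R) : dir_convex phi -> LL phi.
Proof. by move=> [_ cv] x k y; exact: (convex_LL1 (cv x k) y). Qed.

Section dcx_main.
Variables (d : measure_display) (T : measurableType d) (P : probability T R).
Variables (X : 'I_n -> 'I_t -> T -> R) (Xt : 'I_t -> T -> R)
  (f : 'I_t -> ('I_n -> R) -> R).
Hypotheses (hX : forall k j, measurable_fun setT (X k j))
  (hXt : forall j, measurable_fun setT (Xt j))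
  (iX : mutually_independent P X) (iXt : mutually_independent P (replace X i Xt))
  (hf : forall j, USIA (f j)) (hd : dcx_le P (X i) Xt).

Definition Fm (p : W) : 'I_t -> R := fun j => f j (upd (fun k => p.2 k j) i (p.1 j)).

Lemma mFm : measurable_fun setT (Fm : W -> E t).
Proof.
apply: measurable_vec => j.
apply: (@measurableT_comp _ _ _ _ _ _ (f j : E n -> R) setT
  (fun p : W => (upd (fun k => p.2 k j) i (p.1 j) : E n))).
  exact: (LL_measurable (USIA_LL (hf j))).
apply: measurable_vec => k; rewrite /upd.
have [ki|ki] := eqVneq k i.
  apply: (eq_measurable_fun (fun p : W => p.1 j)) => [p _//|].
  exact: (measurableT_comp (measurable_coord j) measurable_fst).
apply: (eq_measurable_fun (fun p : W => p.2 k j)) => [p _//|].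
exact: (measurableT_comp (coordZ j ki) measurable_snd).
Qed.

Lemma mvecX (Y : 'I_t -> T -> R) : (forall j, measurable_fun setT (Y j)) ->
  measurable_fun setT (fun w => vec_at Y w : E t).
Proof. by move=> hY; apply: measurable_vec => j; exact: hY. Qed.

Lemma mZr : measurable_fun setT (fun w => (fun k => vec_at (X k) w) : EZ).
Proof.
apply: (@measurability _ _ T EZ setT _ CZ erefl).
move=> _ [A [B [mB ->]] <-].
have -> : setT `&` (fun w => (fun k => vec_at (X k) w) : EZ) @^-1`
    [set z | forall k, k != i -> B k (z k)] =
    \bigcap_(k in [set k | k != i]) (setT `&` (fun w => vec_at (X k) w : E t) @^-1` B k).
  apply/seteqP; split => w /=.
  - by move=> [_ h] k ki; split => //; exact: h.
  - by move=> h; split => // k ki; have [] := h k ki.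
apply: fin_bigcap_measurable; first exact: finite_finset.
by move=> k _; apply: (mvecX (hX k)) => //; exact: mB.
Qed.

Let V : {RV P >-> E t} := mkRV (mvecX (hX i)).
Let Vt : {RV P >-> E t} := mkRV (mvecX hXt).
Let Zr : {RV P >-> EZ} := mkRV mZr.

Lemma mVZ (U : {RV P >-> E t}) : measurable_fun setT (fun w => (U w, Zr w) : W).
Proof.
apply/measurable_fun_pairP; split; first exact: measurable_funPT.
exact: measurable_funPT.
Qed.

Let VZ : {RV P >-> W} := mkRV (mVZ V).
Let VtZ : {RV P >-> W} := mkRV (mVZ Vt).

Lemma indep_split (Y : 'I_n -> 'I_t -> T -> R) (hY : mutually_independent P Y)
  (A : set ('I_t -> R)) (B : 'I_n -> set ('I_t -> R)) :
  Rt_measurable A -> (forall k, Rt_measurable (B k)) ->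
  P [set w | A (vec_at (Y i) w) /\ forall k, k != i -> B k (vec_at (Y k) w)] =
  (P [set w | A (vec_at (Y i) w)] *
   \prod_(k < n | k != i) P [set w | B k (vec_at (Y k) w)])%E.
Proof.
move=> mA mB.
have mAf : forall k, Rt_measurable (if k == i then A else B k).
  by move=> k; case: (k == i).
have h := hY (fun k => if k == i then A else B k) mAf.
have -> : [set w | A (vec_at (Y i) w) /\ forall k, k != i -> B k (vec_at (Y k) w)] =
   \bigcap_(k in [set: 'I_n]) [set w | (if k == i then A else B k) (vec_at (Y k) w)].
  apply/seteqP; split => w /=.
  - move=> [Aw Bw] k _; case: eqP => [->//|/eqP ki]; exact: Bw.
  - move=> h'; split; first by have := h' i I; rewrite eqxx.
    by move=> k ki; have := h' k I; rewrite (negbTE ki).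
rewrite h (bigD1 i) //= eqxx; congr (_ * _)%E.
by apply: eq_bigr => k ki; rewrite (negbTE ki).
Qed.

Lemma indepX A B : @rect_sets R t A -> CZ B ->
  P (V @^-1` A `&` Zr @^-1` B) = (P (V @^-1` A) * P (Zr @^-1` B))%E.
Proof.
move=> rA [Bf [mBf ->]].
have mA : Rt_measurable A by exact: sub_sigma_algebra.
have e1 : V @^-1` A `&` Zr @^-1` [set z | forall k, k != i -> Bf k (z k)] =
  [set w | A (vec_at (X i) w) /\ forall k, k != i -> Bf k (vec_at (X k) w)] by [].
have e2 : Zr @^-1` [set z | forall k, k != i -> Bf k (z k)] =
  [set w | setT (vec_at (X i) w) /\ forall k, k != i -> Bf k (vec_at (X k) w)].
  by apply/seteqP; split => w /=; [move=> h; split|case].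
rewrite e1 e2 !indep_split //; last exact: (@measurableT _ (E t)).
have -> : [set w | @setT ('I_t -> R) (vec_at (X i) w)] = setT by apply/seteqP; split.
by rewrite probability_setT mul1e.
Qed.

Lemma indepXt A B : @rect_sets R t A -> CZ B ->
  P (Vt @^-1` A `&` Zr @^-1` B) = (P (Vt @^-1` A) * P (Zr @^-1` B))%E.
Proof.
move=> rA [Bf [mBf ->]].
have mA : Rt_measurable A by exact: sub_sigma_algebra.
have e1 : Vt @^-1` A `&` Zr @^-1` [set z | forall k, k != i -> Bf k (z k)] =
  [set w | A (vec_at (replace X i Xt i) w) /\
     forall k, k != i -> Bf k (vec_at (replace X i Xt k) w)].
  apply/seteqP; split => w /=; rewrite /replace eqxx.
    by move=> [Aw Bw]; split => // k ki; rewrite (negbTE ki); exact: Bw.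
  by move=> [Aw Bw]; split => // k ki; have := Bw k ki; rewrite (negbTE ki).
have e2 : Zr @^-1` [set z | forall k, k != i -> Bf k (z k)] =
  [set w | setT (vec_at (X i) w) /\ forall k, k != i -> Bf k (vec_at (X k) w)].
  by apply/seteqP; split => w /=; [move=> h; split|case].
rewrite e1 e2 !indep_split //; last exact: (@measurableT _ (E t)).
have -> : [set w | @setT ('I_t -> R) (vec_at (X i) w)] = setT by apply/seteqP; split.
rewrite probability_setT mul1e /replace eqxx; congr (_ * _)%E.
by apply: eq_bigr => k ki; rewrite (negbTE ki).
Qed.

Let mu := distribution P V.
Let mut := distribution P Vt.
Let nu := distribution P Zr.

Lemma lawJ (S : set W) : measurable S -> distribution P VZ S = (mu \x nu)%E S.
Proof.
exact: (@law_prod d T P V Zr VZ (fun w => erefl) indepX S).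
Qed.

Lemma lawJt (S : set W) : measurable S -> distribution P VtZ S = (mut \x nu)%E S.
Proof.
exact: (@law_prod d T P Vt Zr VtZ (fun w => erefl) indepXt S).
Qed.

Lemma dcx_YYt :
  let Y := fun (j : 'I_t) (w : T) => f j (fun k => X k j w) in
  let Yt := fun (j : 'I_t) (w : T) => f j (fun k => replace X i Xt k j w) in
  dcx_le P Y Yt.
Proof.
move=> Y Yt phi dphi iY iYt.
pose H := fun p : W => (phi (Fm p))%:E.
have eY : (fun w => (phi (vec_at Y w))%:E) = H \o VZ.
  apply/funext => w /=; rewrite /H /Fm /=; congr (phi _)%:E.
  apply/funext => j; rewrite /vec_at /Y; congr (f j).
  by apply/funext => k; rewrite /upd; case: eqP => // ->.
have eYt : (fun w => (phi (vec_at Yt w))%:E) = H \o VtZ.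
  apply/funext => w /=; rewrite /H /Fm /=; congr (phi _)%:E.
  apply/funext => j; rewrite /vec_at /Yt; congr (f j).
  by apply/funext => k; rewrite /replace /upd; case: (k == i).
rewrite eY in iY *; rewrite eYt in iYt *.
have mH : measurable_fun setT H.
  apply/measurable_EFinP.
  exact: (measurableT_comp (LL_measurable (dcx_LL dphi)) mFm).
have iJ := integrable_dist_comp mH iY.
have iJt := integrable_dist_comp mH iYt.
have ip : (mu \x nu)%E.-integrable setT H := integrable_eqm lawJ iJ.
have ipt : (mut \x nu)%E.-integrable setT H := integrable_eqm lawJt iJt.
have E1 : (\int[P]_w (H \o VZ) w = \int[nu]_y fubini_G mu H y)%E.
  rewrite -(integral_distribution mH iY) (integral21_prod_meas1 ip).
  by apply: eq_measure_integral => A mA _; (exact: (lawJ mA) || exact: (esym (lawJ mA))).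
have E2 : (\int[P]_w (H \o VtZ) w = \int[nu]_y fubini_G mut H y)%E.
  rewrite -(integral_distribution mH iYt) (integral21_prod_meas1 ipt).
  by apply: eq_measure_integral => A mA _; (exact: (lawJt mA) || exact: (esym (lawJt mA))).
rewrite E1 E2.
apply: ae_le_int; [exact: measurable_fubini_G ip|exact: measurable_fubini_G ipt|].
move: (ae_integrable2 ip) (ae_integrable2 ipt); apply: filterS2 => y i1 i2.
pose phy := fun x : 'I_t -> R => phi (Fm (x, y)).
have mEphy : measurable_fun setT (EFin \o phy : E t -> \bar R).
  exact: (measurable_int _ i1).
have dphy : dir_convex phy.
  have : forall j, exists ab : R * R, 0 < ab.1 /\
      forall u, f j (upd (fun k => y k j) i u) = ab.1 * u + ab.2.
    by move=> j; have [a [b [a0 h]]] := hf j (fun k => y k j) i; exists (a, b).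
  move=> /choice [ab hab].
  have -> : phy = fun x => phi (fun j => (ab j).1 * x j + (ab j).2).
    apply/funext => x; rewrite /phy /Fm /=; congr phi.
    by apply/funext => j; exact: (hab j).2.
  by apply: dcx_affine => // j; exact: (hab j).1.
have i1' : P.-integrable setT (fun w => (phy (vec_at (X i) w))%:E).
  exact: (integrable_comp_dist (U := V) mEphy i1).
have i2' : P.-integrable setT (fun w => (phy (vec_at Xt w))%:E).
  exact: (integrable_comp_dist (U := Vt) mEphy i2).
have F1 : (fubini_G mu H y = \int[P]_w (phy (vec_at (X i) w))%:E)%E.
  exact: (integral_distribution (X := V) mEphy i1').
have F2 : (fubini_G mut H y = \int[P]_w (phy (vec_at Xt w))%:E)%E.
  exact: (integral_distribution (X := Vt) mEphy i2').
rewrite F1 F2.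
exact: hd phy dphy i1' i2'.
Qed.

End dcx_main.
End main.

Theorem theorem15 (R : realType) (d : measure_display) (T : measurableType d)
  (P : probability T R) (n t : nat) (hn : (0 < n)%N) (ht : (0 < t)%N)
  (X : 'I_n -> 'I_t -> T -> R) (i : 'I_n) (Xt : 'I_t -> T -> R)
  (f : 'I_t -> ('I_n -> R) -> R) :
  (forall k j, measurable_fun setT (X k j)) ->
  (forall j, measurable_fun setT (Xt j)) ->
  mutually_independent P X ->
  mutually_independent P (replace X i Xt) ->
  (forall j, USIA (f j)) ->
  dcx_le P (X i) Xt ->
  (exists C : ('I_t -> R) -> R,
     [/\ is_copula C, cond_increasing_copula C,
         has_copula P (X i) C & has_copula P Xt C]) ->
  let Y := fun (j : 'I_t) (w : T) => f j (fun k => X k j w) in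
  let Yt := fun (j : 'I_t) (w : T) => f j (fun k => replace X i Xt k j w) in
  dcx_le P Y Yt /\
  forall alpha : 'I_t -> R, (forall j, 0 <= alpha j) ->
    cx_le P (fun w => \sum_(j < t) alpha j * Y j w)
            (fun w => \sum_(j < t) alpha j * Yt j w).
Proof.
move=> hX hXt iX iXt hf hd _ Y Yt.
have dY : dcx_le P Y Yt := dcx_YYt hX hXt iX iXt hf hd.
split => // alpha a0 phi cphi i1 i2.
exact: (dY _ (dcx_sum cphi a0) i1 i2).
Qed.
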